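(* For each $i \in [n]$, let $r_i$ be the number of elements $x_j$, $j \ne i$, that are larger than $x_i$ in the comparison graph. Let $S$ be any set of $\min\{n, 2k+1\}$ elements having the smallest values of $r_i$ (ties broken arbitrarily). Then $S$ contains the uncorrupted maximum.
   Context: Model: there are $n$ elements $x_1,\dots,x_n$, exactly $k$ of which are corrupted (unknown to the algorithm). For every pair of distinct elements the comparison graph (a tournament) specifies which one is larger. The comparison graph restricted to the $n-k$ uncorrupted elements is acyclic; comparisons involving corrupted elements may be oriented arbitrarily. The uncorrupted maximum is the uncorrupted element larger than every other uncorrupted element. *)

(* Defs.v *)
From mathcomp Require Import all_boot.
Set Implicit Arguments. Unset Strict Implicit. Unset Printing Implicit Defensive.

(* Elements x_1..x_n are indexed by 'I_n.  [gt i j] means "x_i is larger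
   than x_j" in the comparison graph. *)

Definition tournament (n : nat) (gt : rel 'I_n) : Prop :=
  (forall i, ~~ gt i i) /\
  (forall i j, i != j -> (gt i j || gt j i) /\ ~~ (gt i j && gt j i)).

Definition acyclic_outside (n : nat) (gt : rel 'I_n) (C : {set 'I_n}) : Prop :=
  forall (x : 'I_n) (s : seq 'I_n),
    all (fun y => y \notin C) (x :: s) -> ~~ cycle gt (x :: s).

Definition uncorrupted_max (n : nat) (gt : rel 'I_n) (C : {set 'I_n})
    (m : 'I_n) : Prop :=
  m \notin C /\ forall j, j \notin C -> j != m -> gt m j.

Definition rank_count (n : nat) (gt : rel 'I_n) (i : 'I_n) : nat :=
  #|[set j | (j != i) && gt j i]|.

Definition smallest_r (n : nat) (gt : rel 'I_n) (S : {set 'I_n}) : Prop :=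
  forall i j, i \in S -> j \notin S -> rank_count gt i <= rank_count gt j.

(* Main.v *)
Require Import Defs.
From mathcomp Require Import all_boot.
From mathcomp Require Import zify.

Theorem mainTheorem2 (n k : nat) (C : {set 'I_n}) (gt : rel 'I_n) :
  #|C| = k ->
  tournament gt ->
  acyclic_outside gt C ->
  forall S : {set 'I_n},
    #|S| = minn n (2 * k + 1) ->
    smallest_r gt S ->
    forall m : 'I_n, uncorrupted_max gt C m -> m \in S.
Proof.
move=> hC [irr tot] acyc S hS sm m [mC mmax].
apply/negP => mS.
have antis : forall a b, gt a b -> ~~ gt b a.
  move=> a b hab; case: (eqVneq a b) => [eab|nab].
    by rewrite eab (negbTE (irr b)) in hab.
  by have [_ /negP h] := tot a b nab; apply/negP => hba; apply: h; rewrite hab hba.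
have trans : forall a b c, a \notin C -> b \notin C -> c \notin C ->
    gt a b -> gt b c -> gt a c.
  move=> a b c aC bC cC hab hbc.
  case: (eqVneq a c) => [eac|nac].
    by rewrite eac in hab; rewrite (negbTE (antis _ _ hbc)) in hab.
  have [/orP [//|hca] _] := tot a c nac.
  have := acyc a [:: b; c]; rewrite /= aC bC cC /= hab hbc hca => /(_ isT).
  by [].
have rm : rank_count gt m <= k.
  rewrite -hC /rank_count; apply: subset_leq_card; apply/subsetP => j.
  rewrite inE => /andP [njm hjm]; apply/negPn/negP => jC.
  by have := antis _ _ (mmax j jC njm); rewrite hjm.
have hS2 : #|S| = 2 * k + 1.
  case: (leqP n (2 * k + 1)) => h; last by rewrite hS (minn_idPr (ltnW h)).
  move: hS; rewrite (minn_idPl h) => hS.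
  have eS : S = setT.
    by apply/eqP; rewrite eqEcard subsetT cardsT card_ord hS leqnn.
  by rewrite eS inE in mS.
set U := S :\: C.
have hU : k + 1 <= #|U|.
  have := cardsID C S; rewrite hS2.
  have : #|S :&: C| <= k by rewrite -hC; apply: subset_leq_card; apply: subsetIr.
  rewrite /U; lia.
have [u0 u0U] : exists u0, u0 \in U.
  by apply/set0Pn; rewrite -card_gt0; lia.
set f := fun i => #|[set w in U | gt i w]|.
case: (arg_minnP f u0U) => u uU' umin.
have uU : u \in U := uU'.
have uC : u \notin C by move: uU; rewrite /U !inE => /andP [].
have uS : u \in S by move: uU; rewrite /U !inE => /andP [].
have nobeat : forall v, v \in U -> ~~ gt u v.
  move=> v vU; apply/negP => huv.
  have vC : v \notin C by move: vU; rewrite /U !inE => /andP [].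
  have : f v < f u.
    apply: proper_card; apply/properP; split.
      apply/subsetP => w; rewrite !inE => /andP [wU hvw]; rewrite wU /=.
      have wC : w \notin C by case/andP: wU.
      exact: trans huv hvw.
    by exists v; rewrite !inE -?(in_setD S C) ?vU ?huv ?(negbTE (irr v)) ?andbF.
  by rewrite ltnNge umin.
have : k + 1 <= rank_count gt u.
  apply: (leq_trans hU).
  have -> : #|U| = #|(U :\ u)| + 1.
    by rewrite (cardsD1 u U) uU addnC.
  rewrite /rank_count.
  have mS' : (m \in S) = false by apply/negP.
  have mnU : m \notin U by rewrite /U !inE mS' andbF.
  have -> : #|U :\ u| + 1 = #|m |: (U :\ u)|.
    by rewrite cardsU1 in_setD1 (negbTE mnU) andbF addnC.
  apply: subset_leq_card; apply/subsetP => w; rewrite !inE => /orP [/eqP ->|/andP [wu wU]].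
    have mu : m != u by apply/eqP => e; apply: mS; rewrite e.
    by rewrite mu /= mmax // eq_sym.
  rewrite wu /=; have : w != u by [].
  move=> /(tot w u) [/orP [//|h] _].
  by rewrite (negbTE (nobeat w (etrans (in_setD S C w) wU))) in h.
have := sm u m uS (introN idP mS). lia.
Qed.
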